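(* Let $n\ge1$ and $a=(a_0,\dots,a_n)\in\mathbb{Z}^{n+1}$ with $a_i\ge 0$ for all $i$ and $a_0=a_n=0$. Let $m\ge 0$ and let $0=c_0<c_1<\cdots<c_m<c_{m+1}=1$ and $0=e_0<e_1<\cdots<e_m<e_{m+1}=1$ be real numbers. Assume that a tropical recurrent minimal sequence $y=(y_i)_{i\in\mathbb{Z}}$ satisfies $a$. For each $i\in\mathbb{Z}$ let $0\le j\le m$ be the unique index with $c_j\le \langle y_i\rangle<c_{j+1}$ and put $x_i:=\lfloor y_i\rfloor+e_j$. Then $x=(x_i)_{i\in\mathbb{Z}}$ is also a tropical recurrent minimal sequence satisfying $a$.
   Context: $\langle e\rangle=e-\lfloor e\rfloor$ denotes the fractional part of a real $e$. A tropical recurrent sequence is $y=(y_j)_{j\in\mathbb{Z}}$ with real entries; it satisfies $a$ if for every $k\in\mathbb{Z}$ the minimum $\min_{0\le i\le n}\{a_i+y_{i+k}\}$ is attained for at least two different indices $i$; it is minimal if for every $j\in\mathbb{Z}$ there is $k$ with $j-n\le k\le j$ and $a_{j-k}+y_j=\min_{0\le i\le n}\{a_i+y_{i+k}\}$. *)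

(* Defs.v *)
From Stdlib Require Export Reals ZArith Lia Lra.
Open Scope R_scope.

(* floor of a real: Int_part r = up r - 1 is the greatest integer <= r *)
Definition floorZ (r : R) : Z := Int_part r.
Definition frac (r : R) : R := r - IZR (floorZ r).

Definition tterm (a : nat -> Z) (y : Z -> R) (k : Z) (i : nat) : R :=
  IZR (a i) + y (Z.of_nat i + k)%Z.

Definition attains_min (n : nat) (a : nat -> Z) (y : Z -> R) (k : Z) (i : nat) : Prop :=
  (i <= n)%nat /\ forall l : nat, (l <= n)%nat -> tterm a y k i <= tterm a y k l.

Definition satisfies (n : nat) (a : nat -> Z) (y : Z -> R) : Prop :=
  forall k : Z, exists i1 i2 : nat,
    i1 <> i2 /\ attains_min n a y k i1 /\ attains_min n a y k i2.

Definition minimal (n : nat) (a : nat -> Z) (y : Z -> R) : Prop :=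
  forall j : Z, exists k : Z,
    (j - Z.of_nat n <= k)%Z /\ (k <= j)%Z /\
    attains_min n a y k (Z.to_nat (j - k)).

(* Main.v *)
Require Import Defs.

Lemma mono_f (f : nat -> R) (m : nat) :
  (forall j : nat, (j <= m)%nat -> f j < f (S j)) ->
  forall i j, (i <= j)%nat -> (j <= S m)%nat -> f i <= f j.
Proof.
  intros H i j Hij. induction Hij; intros Hj.
  - lra.
  - assert (f m0 < f (S m0)) by (apply H; lia).
    assert (f i <= f m0) by (apply IHHij; lia). lra.
Qed.

Lemma floor_spec (r : R) : IZR (floorZ r) <= r < IZR (floorZ r) + 1.
Proof.
  unfold floorZ. destruct (base_Int_part r). lra.
Qed.

Lemma exists_j (m : nat) (c : nat -> R) (r : R) :
  c 0%nat = 0 -> c (S m) = 1 ->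
  0 <= r < 1 ->
  exists j, (j <= m)%nat /\ c j <= r < c (S j).
Proof.
  intros H0 H1 Hr.
  assert (P : forall k, (k <= S m)%nat -> r < c k ->
             exists j, (j < k)%nat /\ c j <= r < c (S j)).
  { induction k; intros Hk Hlt.
    - lra.
    - destruct (Rlt_or_le r (c k)) as [Hl|Hl].
      + destruct (IHk ltac:(lia) Hl) as [j [Hj1 Hj2]]. exists j. split; [lia|auto].
      + exists k. split; [lia|lra]. }
  destruct (P (S m) ltac:(lia) ltac:(lra)) as [j [Hj1 Hj2]].
  exists j. split; [lia|auto].
Qed.

Lemma key (m : nat) (c e : nat -> R) (s t : R) (A B : Z) (j1 j2 : nat) :
  (forall j : nat, (j <= m)%nat -> c j < c (S j)) ->
  e 0%nat = 0 -> e (S m) = 1 ->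
  (forall j : nat, (j <= m)%nat -> e j < e (S j)) ->
  (j1 <= m)%nat -> (j2 <= m)%nat ->
  c j1 <= frac s < c (S j1) -> c j2 <= frac t < c (S j2) ->
  IZR A + s <= IZR B + t ->
  IZR A + (IZR (floorZ s) + e j1) <= IZR B + (IZR (floorZ t) + e j2).
Proof.
  intros Hc He0 He1 He Hj1 Hj2 Hs Ht Hst.
  unfold frac in *.
  pose proof (floor_spec s) as Fs. pose proof (floor_spec t) as Ft.
  assert (E1 : 0 <= e j1 < 1).
  { split. rewrite <- He0. apply (mono_f e m He); lia.
    rewrite <- He1. assert (e j1 <= e m) by (apply (mono_f e m He); lia).
    assert (e m < e (S m)) by (apply He; lia). lra. }
  assert (E2 : 0 <= e j2 < 1).
  { split. rewrite <- He0. apply (mono_f e m He); lia.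
    rewrite <- He1. assert (e j2 <= e m) by (apply (mono_f e m He); lia).
    assert (e m < e (S m)) by (apply He; lia). lra. }
  set (F := (A + floorZ s)%Z). set (G := (B + floorZ t)%Z).
  assert (HF : IZR F = IZR A + IZR (floorZ s)) by (unfold F; apply plus_IZR).
  assert (HG : IZR G = IZR B + IZR (floorZ t)) by (unfold G; apply plus_IZR).
  destruct (Z.lt_trichotomy F G) as [L|[L|L]].
  - assert (IZR (F + 1) <= IZR G) by (apply IZR_le; lia).
    rewrite plus_IZR in H. lra.
  - assert (IZR F = IZR G) by (rewrite L; auto).
    destruct (le_lt_dec j1 j2) as [Hle|Hlt].
    + assert (e j1 <= e j2) by (apply (mono_f e m He); lia). lra.
    + assert (c (S j2) <= c j1) by (apply (mono_f c m Hc); lia). lra.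
  - assert (IZR (G + 1) <= IZR F) by (apply IZR_le; lia).
    rewrite plus_IZR in H. lra.
Qed.

Theorem lemma3 (n : nat) (a : nat -> Z) (m : nat) (c e : nat -> R) (y x : Z -> R) :
  (1 <= n)%nat ->
  (forall i : nat, (i <= n)%nat -> (0 <= a i)%Z) ->
  a 0%nat = 0%Z -> a n = 0%Z ->
  c 0%nat = 0 -> c (S m) = 1 ->
  (forall j : nat, (j <= m)%nat -> c j < c (S j)) ->
  e 0%nat = 0 -> e (S m) = 1 ->
  (forall j : nat, (j <= m)%nat -> e j < e (S j)) ->
  satisfies n a y -> minimal n a y ->
  (forall (i : Z) (j : nat), (j <= m)%nat -> c j <= frac (y i) < c (S j) ->
      x i = IZR (floorZ (y i)) + e j) ->
  satisfies n a x /\ minimal n a x.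
Proof.
  intros Hn Ha Ha0 Han Hc0 Hc1 Hc He0 He1 He Hsat Hmin Hx.
  assert (J : forall i, exists j, (j <= m)%nat /\ c j <= frac (y i) < c (S j)).
  { intros i. apply exists_j; auto. pose proof (floor_spec (y i)). unfold frac. lra. }
  assert (T : forall k i, attains_min n a y k i -> attains_min n a x k i).
  { intros k i [Hi Hl]. split; auto. intros l Hl'.
    specialize (Hl l Hl'). unfold tterm in *.
    destruct (J (Z.of_nat i + k)%Z) as [j1 [Hj1 Hc1']].
    destruct (J (Z.of_nat l + k)%Z) as [j2 [Hj2 Hc2']].
    rewrite (Hx _ j1 Hj1 Hc1'), (Hx _ j2 Hj2 Hc2').
    apply (key m c e); auto. }
  split.
  - intros k. destruct (Hsat k) as [i1 [i2 [H1 [H2 H3]]]].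
    exists i1, i2. auto.
  - intros j. destruct (Hmin j) as [k [H1 [H2 H3]]]. exists k. auto.
Qed.
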